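(* Let $P,R\in\mathrm{Sym}(n,\mathbb{R})$ and $Q\in\mathrm{Mat}(n,\mathbb{R})$, let $B=\begin{bmatrix}P^{-1}&-P^{-1}Q\\-Q^TP^{-1}&Q^TP^{-1}Q-R\end{bmatrix}$ and $J=\begin{bmatrix}0&-I_n\\ I_n&0\end{bmatrix}$. If $\begin{bmatrix}P&Q\\Q^T&R\end{bmatrix}$ is positive definite, then $JB$ is hyperbolic.
   Context: A real matrix is hyperbolic if it has no eigenvalue on the imaginary axis. (Positive definiteness of the block matrix forces $P$ to be positive definite, hence invertible.) *)

(* Defs.v *)
From mathcomp Require Import all_boot all_order all_algebra.
From mathcomp Require Import complex.
Set Implicit Arguments. Unset Strict Implicit. Unset Printing Implicit Defensive.
Import Order.TTheory GRing.Theory Num.Theory.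
Local Open Scope ring_scope.

Definition symmx (R : rcfType) (n : nat) (A : 'M[R]_n) : Prop := A^T = A.

Definition posdef (R : rcfType) (n : nat) (A : 'M[R]_n) : Prop :=
  A^T = A /\ forall x : 'cV[R]_n, x != 0 -> 0 < (x^T *m A *m x) 0 0.

Definition hyperbolic (R : rcfType) (m : nat) (A : 'M[R]_m) : Prop :=
  forall z : R[i], eigenvalue (map_mx (real_complex R) A) z -> complex.Re z != 0.

Definition Jmx (R : rcfType) (n : nat) : 'M[R]_(n + n) :=
  block_mx 0 (- 1%:M) 1%:M 0.

Definition Bmx (R : rcfType) (n : nat) (P Q Rm : 'M[R]_n) : 'M[R]_(n + n) :=
  block_mx (invmx P) (- (invmx P *m Q))
           (- (Q^T *m invmx P)) (Q^T *m invmx P *m Q - Rm).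

(* Main.v *)
Require Import Defs.
From mathcomp Require Import all_boot all_order all_algebra.
From mathcomp Require Import complex.
From mathcomp Require Import ring.
Import Order.TTheory GRing.Theory Num.Theory.
Local Open Scope ring_scope.

Section S.
Variable R : rcfType.
Variable n : nat.
Variables P Q Rm : 'M[R]_n.

Lemma Punit : P^T = P -> posdef (block_mx P Q Q^T Rm) -> P \in unitmx.
Proof.
move=> sP [_ pd]; rewrite unitmxE unitfE; apply/negP => /det0P [v v0 vP].
have := pd (col_mx v^T 0); rewrite col_mx_eq0 trmx_eq0 (negPf v0) => /(_ isT).
rewrite tr_col_mx trmx0 mul_row_block !mul0mx !addr0 trmxK vP mul_row_col mul0mx.
by rewrite add0r mulmx0 mxE ltxx.
Qed.

Lemma JB_eq : Jmx R n *m Bmx P Q Rm =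
  block_mx (Q^T *m invmx P) (Rm - Q^T *m invmx P *m Q)
           (invmx P) (- (invmx P *m Q)).
Proof.
rewrite /Jmx /Bmx mulmx_block !mul0mx !mul1mx !add0r !addr0 !mulNmx !mul1mx.
by rewrite opprK opprB.
Qed.


Lemma usub_mul m1 m2 k p (X : 'M[R]_(m1 + m2, k)) (v : 'M_(k, p)) :
  usubmx (X *m v) = usubmx X *m v.
Proof. by rewrite -{1}(vsubmxK X) mul_col_mx col_mxKu. Qed.

Lemma dsub_mul m1 m2 k p (X : 'M[R]_(m1 + m2, k)) (v : 'M_(k, p)) :
  dsubmx (X *m v) = dsubmx X *m v.
Proof. by rewrite -{1}(vsubmxK X) mul_col_mx col_mxKd. Qed.

Lemma row10 k p (v : 'M[R]_(k + k, p)) : row_mx 1%:M 0 *m v = usubmx v.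
Proof. by rewrite -{1}(vsubmxK v) mul_row_col mul1mx mul0mx addr0. Qed.

Lemma row01 k p (v : 'M[R]_(k + k, p)) : row_mx 0 1%:M *m v = dsubmx v.
Proof. by rewrite -{1}(vsubmxK v) mul_row_col mul1mx mul0mx add0r. Qed.

Lemma dsubZ m1 m2 p (c : R) (v : 'M[R]_(m1 + m2, p)) : dsubmx (c *: v) = c *: dsubmx v.
Proof. by apply/matrixP => i j; rewrite !mxE. Qed.
Lemma usubZ m1 m2 p (c : R) (v : 'M[R]_(m1 + m2, p)) : usubmx (c *: v) = c *: usubmx v.
Proof. by apply/matrixP => i j; rewrite !mxE. Qed.
Lemma trZ m p (c : R) (v : 'M[R]_(m, p)) : (c *: v)^T = c *: v^T.
Proof. by apply/matrixP => i j; rewrite !mxE. Qed.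

Lemma key : P^T = P -> posdef (block_mx P Q Q^T Rm) ->
  forall (a b : 'cV[R]_(n + n)) (w : R),
  Jmx R n *m Bmx P Q Rm *m a = (- w) *: b ->
  Jmx R n *m Bmx P Q Rm *m b = w *: a -> a = 0 /\ b = 0.
Proof.
move=> sP pd a b w ha hb.
have Pu := Punit sP pd.
set A := Jmx R n *m Bmx P Q Rm in ha hb.
set M := block_mx P Q Q^T Rm.
pose W : 'M[R]_(n + n) := block_mx (invmx P) (- (invmx P *m Q)) 0 1%:M.
have hW : W = col_mx (dsubmx A) (row_mx 0 1%:M).
  by rewrite /A JB_eq /W /block_mx col_mxKd.
have hMW : M *m W = col_mx (row_mx 1%:M 0) (usubmx A).
  rewrite /A JB_eq /M /W mulmx_block /block_mx col_mxKu.
  rewrite !mulmx0 !mulmx1 !addr0 mulmxV // mulmxN mulmxA mulmxV // mul1mx addNr.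
  by rewrite mulmxN mulmxA addrC.
have hq : forall v : 'cV[R]_(n + n),
   (W *m v)^T *m M *m (W *m v) =
   (dsubmx (A *m v))^T *m usubmx v + (dsubmx v)^T *m usubmx (A *m v).
  move=> v; rewrite -mulmxA (mulmxA M) hMW {1}hW !mul_col_mx tr_col_mx mul_row_col.
  by rewrite row10 row01 dsub_mul usub_mul.
have hsum : ((W *m a)^T *m M *m (W *m a)) 0 0 + ((W *m b)^T *m M *m (W *m b)) 0 0 = 0.
  rewrite !hq ha hb !dsubZ !usubZ !trZ -!scalemxAl -!scalemxAr.
  move: ((dsubmx b)^T *m usubmx a) ((dsubmx a)^T *m usubmx b) => X Y.
  rewrite !mxE; ring.
have ge0 : forall v : 'cV[R]_(n + n), 0 <= ((W *m v)^T *m M *m (W *m v)) 0 0.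
  move=> v; have [->|nz] := eqVneq (W *m v) 0.
    by rewrite mulmx0 mxE.
  by apply: ltW; apply: pd.2.
have zero : forall v : 'cV[R]_(n + n),
    ((W *m v)^T *m M *m (W *m v)) 0 0 = 0 -> v = 0.
  move=> v hv; have Wv : W *m v = 0.
    apply/eqP; apply/negP => /negP nz; have := pd.2 _ nz; by rewrite hv ltxx.
  have h1 : M *m W *m v = 0 by rewrite -mulmxA Wv mulmx0.
  rewrite hMW mul_col_mx row10 in h1.
  have u0 : usubmx v = 0 by rewrite -(col_mxKu (usubmx v) (usubmx A *m v)) h1 -col_mx0 col_mxKu.
  rewrite hW mul_col_mx row01 in Wv.
  have d0 : dsubmx v = 0 by rewrite -(col_mxKd (dsubmx A *m v) (dsubmx v)) Wv -col_mx0 col_mxKd.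
  by rewrite -(vsubmxK v) u0 d0 col_mx0.
move/eqP: hsum; rewrite paddr_eq0 ?ge0 // => /andP[/eqP /zero -> /eqP /zero ->].
by [].
Qed.

End S.

Local Open Scope complex_scope.

Lemma ReC {R : rcfType} (x y : R) : complex.Re (x%:C + 'i * y%:C)%C = x.
Proof. by rewrite /= mul0r mulr0 subr0 addr0. Qed.
Lemma ImC {R : rcfType} (x y : R) : complex.Im (x%:C + 'i * y%:C)%C = y.
Proof. by rewrite /= mul0r mul1r !add0r. Qed.

Lemma cpx_inj {R : rcfType} {m k} {p q p' q' : 'M[R]_(m, k)} :
  map_mx (real_complex R) p + 'i%C *: map_mx (real_complex R) q =
  map_mx (real_complex R) p' + 'i%C *: map_mx (real_complex R) q' ->
  p = p' /\ q = q'.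
Proof.
move=> h; split; apply/matrixP => i j; have := congr1 (fun M : 'M[R[i]]_(m, k) => M i j) h;
  rewrite !mxE => e.
- by rewrite -(ReC (p i j) (q i j)) e ReC.
- by rewrite -(ImC (p i j) (q i j)) e ImC.
Qed.

Theorem corollary2p2 (R : rcfType) (n : nat) (P Q Rm : 'M[R]_n) :
  symmx P -> symmx Rm ->
  posdef (block_mx P Q Q^T Rm) ->
  hyperbolic (Jmx R n *m Bmx P Q Rm).
Proof.
rewrite /symmx => sP sR pd z /eigenvalueP [v vA v0].
apply/negP => /eqP rez.
set A := Jmx R n *m Bmx P Q Rm in vA *.
set AC := map_mx (real_complex R) A in vA *.
have : \det (AC - z%:M) == 0.
  by apply/det0P; exists v => //; rewrite mulmxBr vA mul_mx_scalar subrr.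
rewrite -det_tr => /det0P [u u0 uA].
set c := u^T.
have hc : AC *m c = z *: c.
  have := congr1 trmx uA; rewrite trmx_mul trmxK trmx0 mulmxBl mul_scalar_mx.
  by move/eqP; rewrite subr_eq0 => /eqP.
set a := map_mx (@complex.Re R) c.
set b := map_mx (@complex.Im R) c.
have hdec : c = map_mx (real_complex R) a + 'i%C *: map_mx (real_complex R) b.
  by apply/matrixP => i j; rewrite !mxE -complexE.
have hz : z = 'i%C * (complex.Im z)%:C.
  by rewrite {1}(complexE z) rez rmorph0 add0r.
set w := complex.Im z in hz.
have e : map_mx (real_complex R) (A *m a) + 'i%C *: map_mx (real_complex R) (A *m b) =
         map_mx (real_complex R) ((- w) *: b) + 'i%C *: map_mx (real_complex R) (w *: a).
  have mA : forall x : 'cV[R]_(n + n), map_mx (real_complex R) (A *m x) = AC *m map_mx (real_complex R) x by move=> x; rewrite map_mxM.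
  rewrite !mA !map_mxZ scalemxAr -mulmxDr -hdec hc hz hdec.
  rewrite scalerDr !scalerA addrC; congr (_ + _).
    congr (_ *: _); rewrite rmorphN mulrAC -expr2 sqr_i mulN1r //.
have [ha hb] := cpx_inj e.
have [a0 b0] := @key R n P Q Rm sP pd _ _ _ ha hb.
move: u0; rewrite -trmx_eq0 -/c hdec a0 b0 !map_mx0 scaler0 addr0 eqxx //.
Qed.
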